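(* Let $\beta_t>0$ for $t\in[0,1]$, set the base drift $f:=0$, and consider the Schr\''odinger bridge $\mathrm{d}X_t=\beta_t\nabla\log\Psi(X_t,t)\mathrm{d}t+\sqrt{\beta_t}\mathrm{d}W_t$ (equivalently $\mathrm{d}X_t=-\beta_t\nabla\log\widehat\Psi(X_t,t)\mathrm{d}t+\sqrt{\beta_t}\mathrm{d}\overline W_t$) between boundary distributions at $t=0$ and $t=1$. Define $\sigma_t^2:=\int_0^t\beta_\tau\,\mathrm{d}\tau$ and $\bar\sigma_t^2:=\int_t^1\beta_\tau\,\mathrm{d}\tau$. Then the posterior of $X_t$ given the boundary pair $(X_0,X_1)$ is $$q(X_t\mid X_0,X_1)=\mathcal N\big(X_t;\mu_t(X_0,X_1),\Sigma_t\big),\quad \mu_t=\frac{\bar\sigma_t^2}{\bar\sigma_t^2+\sigma_t^2}X_0+\frac{\sigma_t^2}{\bar\sigma_t^2+\sigma_t^2}X_1,\quad \Sigma_t=\frac{\sigma_t^2\bar\sigma_t^2}{\bar\sigma_t^2+\sigma_t^2}I.$$ Moreover, for a time discretization $0=t_0<\dots<t_N=1$ with $X_n:=X_{t_n}$, let $p(X_n\mid X_0,X_{n+1})$ denote the DDPM posterior, i.e. the conditional density of $X_{t_n}$ given $X_0$ and $X_{t_{n+1}}$ under the process $\mathrm{d}X_t=\sqrt{\beta_t}\,\mathrm{d}W_t$ started at $X_0$. Then for every $0\le n\le N-1$, $$q(X_n\mid X_0,X_N)=\int\prod_{k=n}^{N-1}p(X_k\mid X_0,X_{k+1})\,\mathr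m{d}X_{n+1}\cdots\mathrm{d}X_{N-1}.$$
   Context: $W_t$ is a standard $d$-dimensional Wiener process, $\overline W_t$ its reversed-time counterpart, and $\Psi,\widehat\Psi$ are the Schr\''odinger bridge potentials, solving $\partial_t\Psi=-\tfrac12\beta_t\Delta\Psi$, $\partial_t\widehat\Psi=\tfrac12\beta_t\Delta\widehat\Psi$ (the system with $f=0$) with $\Psi(\cdot,0)\widehat\Psi(\cdot,0)$ and $\Psi(\cdot,1)\widehat\Psi(\cdot,1)$ equal to the boundary densities at $t=0$ and $t=1$. $I$ is the $d\times d$ identity. Explicitly, with $\alpha_n^2:=\int_{t_n}^{t_{n+1}}\beta_\tau\mathrm{d}\tau$, $p(X_n\mid X_0,X_{n+1})=\mathcal N\big(X_n;\frac{\alpha_n^2}{\alpha_n^2+\sigma_{t_n}^2}X_0+\frac{\sigma_{t_n}^2}{\alpha_n^2+\sigma_{t_n}^2}X_{n+1},\frac{\sigma_{t_n}^2\alpha_n^2}{\alpha_n^2+\sigma_{t_n}^2}I\big)$. *)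

(* Defs.v *)
From HB Require Import structures.
From mathcomp Require Import all_boot all_order all_algebra.
From mathcomp Require Import all_classical all_reals all_analysis.
Set Implicit Arguments. Unset Strict Implicit. Unset Printing Implicit Defensive.
Import Order.TTheory GRing.Theory Num.Theory.
Import numFieldNormedType.Exports.
Local Open Scope classical_set_scope.
Local Open Scope ring_scope.

Section Defs.
Variable R : realType.

(* Lebesgue integral over R^d (points are row vectors 'rV[R]_d), defined as
   the iterated one-dimensional Lebesgue integral over the coordinates. *)
Fixpoint intRd (d : nat) : ('rV[R]_d -> \bar R) -> \bar R :=
  match d with
  | 0 => fun F => F 0
  | d'.+1 => fun F =>
      (\int[@lebesgue_measure R]_(x in [set: R])
         intRd (fun v : 'rV[R]_d' => F (row_mx (const_mx x : 'rV[R]_1) v)))%E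
  end.

Definition sqnorm (d : nat) (v : 'rV[R]_d) : R := \sum_(i < d) (v 0 i) ^+ 2.

Definition gauss (d : nat) (m : 'rV[R]_d) (v : R) (x : 'rV[R]_d) : R :=
  (Num.sqrt (2 * pi * v)) ^- d * expR (- sqnorm (x - m) / (2 * v)).

Definition sig2 (beta : R -> R) (s t : R) : R :=
  fine (\int[@lebesgue_measure R]_(x in `[s, t]) (beta x)%:E)%E.

(* transition density of the reference process dX = sqrt(beta) dW, from (x,s) to (y,t) *)
Definition refK (d : nat) (beta : R -> R) (s t : R) (x y : 'rV[R]_d) : R :=
  gauss x (sig2 beta s t) y.

(* transition density of the Schroedinger bridge dX = beta grad log Psi dt + sqrt(beta) dW
   (Doob h-transform of the reference process by Psi) *)
Definition sbK (d : nat) (beta : R -> R) (Psi : 'rV[R]_d -> R -> R)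
  (s t : R) (x y : 'rV[R]_d) : R :=
  refK beta s t x y * Psi y t / Psi x s.

(* joint density of (X_0, X_t, X_1) under the bridge, initial density Psi(.,0) Psihat(.,0) *)
Definition sb_joint (d : nat) (beta : R -> R) (Psi Psihat : 'rV[R]_d -> R -> R)
  (t : R) (x0 xt x1 : 'rV[R]_d) : R :=
  Psi x0 0 * Psihat x0 0 * sbK beta Psi 0 t x0 xt * sbK beta Psi t 1 xt x1.

Definition sb_post (d : nat) (beta : R -> R) (Psi Psihat : 'rV[R]_d -> R -> R)
  (t : R) (x0 x1 xt : 'rV[R]_d) : R :=
  sb_joint beta Psi Psihat t x0 xt x1 /
  fine (intRd (fun y => (sb_joint beta Psi Psihat t x0 y x1)%:E)).

Definition ddpm_post (d : nat) (beta : R -> R) (tg : nat -> R) (n : nat)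
  (x0 y xn : 'rV[R]_d) : R :=
  refK beta 0 (tg n) x0 xn * refK beta (tg n) (tg n.+1) xn y /
  refK beta 0 (tg n.+1) x0 y.

(* chain j n x0 xN xn = int prod_{k=n}^{n+j} p(X_k | X_0, X_{k+1}) dX_{n+1} ... dX_{n+j},
   with X_{n+j+1} := xN, written as iterated integral (Tonelli) *)
Fixpoint chain (d : nat) (beta : R -> R) (tg : nat -> R) (j n : nat)
  (x0 xN xn : 'rV[R]_d) : \bar R :=
  match j with
  | 0 => (ddpm_post beta tg n x0 xN xn)%:E
  | j'.+1 => intRd (fun y => (ddpm_post beta tg n x0 y xn)%:E
                              * chain beta tg j' n.+1 x0 xN y)%E
  end.

End Defs.

(* Main.v *)
Require Import Defs.
From HB Require Import structures.
From mathcomp Require Import all_boot all_order all_algebra.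
From mathcomp Require Import all_classical all_reals all_analysis.
From mathcomp Require Import ring lra zify measurable_realfun.
Import Order.TTheory GRing.Theory Num.Theory.
Import numFieldNormedType.Exports.
Local Open Scope classical_set_scope.
Local Open Scope ring_scope.
Section G.
Variable R : realType.

Lemma sumDiv d (F : 'I_d -> R) (c : R) : - (\sum_(i < d) F i) / c = \sum_(i < d) (- F i / c).
Proof. by rewrite -sumrN mulr_suml. Qed.

Lemma gauss_prod d (a b x : 'rV[R]_d) (u v : R) : 0 < u -> 0 < v ->
  gauss a u x * gauss x v b =
  gauss a (u + v) b * gauss ((v / (u + v)) *: a + (u / (u + v)) *: b) (u * v / (u + v)) x.
Proof.
move=> u0 v0.
have uv0 : 0 < u + v by lra.
rewrite /gauss mulrACA [RHS]mulrACA -!expRD; congr (_ * expR _).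
  have hp := pi_gt0 R.
  rewrite -!exprVn -!exprMn -!invfM -!sqrtrM; first last.
  - by apply: mulr_ge0; [apply: mulr_ge0 => //; exact: ltW|exact: ltW].
  - by apply: mulr_ge0; [apply: mulr_ge0 => //; exact: ltW|exact: ltW].
  by congr ((Num.sqrt _)^-1 ^+ _); field; rewrite gt_eqF.
rewrite /sqnorm !sumDiv -!big_split /=; apply: eq_bigr => i _.
rewrite !mxE; field; lra.
Qed.

Lemma sqnorm_split d (w : 'rV[R]_(1 + d)) :
  sqnorm w = (w 0 0) ^+ 2 + sqnorm (rsubmx w).
Proof.
rewrite /sqnorm big_ord_recl /=; congr (_ + _); apply: eq_bigr => i _.
rewrite mxE; congr (w 0 _ ^+ 2); exact: val_inj.
Qed.

Lemma gauss_split d (m : 'rV[R]_(1 + d)) (v x : R) (w : 'rV[R]_d) : 0 < v ->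
  gauss m v (row_mx (const_mx x : 'rV[R]_1) w) =
  normal_pdf (m 0 0) (Num.sqrt v) x * gauss (rsubmx m) v w.
Proof.
move=> v0.
rewrite /gauss /normal_pdf sqrtr_eq0 lt_geF // /normal_peak /normal_fun sqr_sqrtr ?ltW //.
rewrite sqnorm_split linearB /= row_mxKr.
have -> : (row_mx (const_mx x : 'rV[R]_1) w - m) 0 0 = x - m 0 0.
  rewrite !mxE; have -> : (0 : 'I_(1 + d)) = lshift d (0 : 'I_1) by exact: val_inj.
  by rewrite (unsplitK (inl (0:'I_1) : 'I_1 + 'I_d)) mxE.
rewrite mulrACA; congr (_ * _).
  rewrite exprS invfM; congr (_^-1 * _); congr Num.sqrt; rewrite -mulr_natr; ring.
rewrite -expRD; congr expR; rewrite -mulr_natr; field; lra.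
Qed.

Lemma int_normal (mm v c : R) : 0 < v -> 0 <= c ->
  (\int[@lebesgue_measure R]_(x in [set: R]) (c * normal_pdf mm (Num.sqrt v) x)%:E = c%:E)%E.
Proof.
move=> v0 c0.
under eq_integral do rewrite EFinM.
rewrite integralZl //; last exact: integrable_normal_pdf.
by rewrite integral_normal_pdf mule1.
Qed.

Lemma intRd_gauss d (m : 'rV[R]_d) (v c : R) : 0 < v -> 0 <= c ->
  intRd (fun x => (c * gauss m v x)%:E) = c%:E.
Proof.
move=> v0; elim: d m c => [|d IH] m c c0.
  by rewrite /= /gauss /sqnorm big_ord0 expr0 invr1 mul1r oppr0 mul0r expR0 mulr1.
rewrite /=.
transitivity (\int[@lebesgue_measure R]_(x in [set: R])
   intRd (fun w : 'rV[R]_d => ((c * normal_pdf (m 0 0) (Num.sqrt v) x) *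
      gauss (rsubmx (m : 'rV[R]_(1 + d))) v w)%:E))%E.
  apply: eq_integral => x _; congr intRd; apply/funext => w.
  by rewrite gauss_split // mulrA.
under eq_integral do rewrite IH ?mulr_ge0 ?normal_pdf_ge0 //.
exact: int_normal.
Qed.

Section Sig.
Variable beta : R -> R.
Hypothesis beta_pos : forall t : R, 0 <= t <= 1 -> 0 < beta t.
Hypothesis beta_int : (@lebesgue_measure R).-integrable `[0, 1] (EFin \o beta).
Local Notation mu := (@lebesgue_measure R).

Lemma sub01 (s t : R) : 0 <= s -> t <= 1 -> `[s, t] `<=` `[0, 1].
Proof. move=> s0 t1 x /=; rewrite !in_itv /= => /andP[a b]; apply/andP; split; lra. Qed.

Lemma int_sub {s t : R} : 0 <= s -> t <= 1 -> mu.-integrable `[s, t] (EFin \o beta).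
Proof. by move=> s0 t1; apply: integrableS beta_int => //; exact: sub01. Qed.

Lemma int_fin (s t : R) : 0 <= s -> t <= 1 ->
  (\int[mu]_(x in `[s, t]) (beta x)%:E)%E \is a fin_num.
Proof. by move=> s0 t1; exact: (integrable_fin_num _ (int_sub s0 t1)). Qed.

Lemma sig2_add (s t u : R) : 0 <= s <= t -> t <= u <= 1 ->
  sig2 beta s t + sig2 beta t u = sig2 beta s u.
Proof.
move=> /andP[s0 st] /andP[tu u1].
have mf : measurable_fun (`[s, u] : set R) (fun x : R => (beta x)%:E).
  exact: (measurable_int _ (int_sub s0 u1)).
rewrite /sig2 -fineD; [|apply: int_fin; lra|apply: int_fin; lra].
congr fine.
symmetry.
rewrite (@itv_bndbnd_setU _ _ (BLeft s) (BRight t) (BRight u)) ?bnd_simp //.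
rewrite integral_setU //=; first last.
- rewrite /disj_set; apply/eqP/seteqP; split => x //= [].
  by rewrite !in_itv /= => /andP[_ a] /andP[b _]; lra.
- by rewrite -itv_bndbnd_setU ?bnd_simp.
congr (_ + _)%E.
rewrite integral_itv_obnd_cbnd //.
apply: measurable_funS mf => //; exact: subset_itvr.
Qed.

Lemma sig2_pos (s t : R) : 0 <= s -> s < t -> t <= 1 -> 0 < sig2 beta s t.
Proof.
move=> s0 st t1.
have fin := int_fin _ _ s0 t1.
have ge0 : (0 <= \int[mu]_(x in `[s, t]) (beta x)%:E)%E.
  apply: integral_ge0 => x /=; rewrite in_itv /= => /andP[a b].
  rewrite lee_fin ltW // beta_pos //; apply/andP; split; lra.
rewrite /sig2 lt_neqAle fine_ge0 // andbT; apply/negP => /eqP H.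
have H0 : (\int[mu]_(x in `[s, t]) (beta x)%:E = 0)%E.
  by rewrite -(fineK fin) -H.
have mf : measurable_fun (`[s, t] : set R) (fun x : R => (beta x)%:E).
  exact: (measurable_int _ (int_sub s0 t1)).
have : (\int[mu]_(x in `[s, t]) `|(beta x)%:E| = 0)%E.
  rewrite -H0; apply: eq_integral => x; rewrite inE /= in_itv /= => /andP[a b].
  rewrite ger0_norm // ltW // beta_pos //; apply/andP; split; lra.
move=> Hi; have mI : measurable (`[s, t] : set R) by exact: measurable_itv.
have := proj1 (ae_eq_integral_abs mu mI mf) Hi. case=> N [mN N0 sub].
have : mu (`[s, t] : set R) = 0%E.
  apply: (subset_measure0 _ _ _ N0) => //.
  move=> x sx; apply: sub => /= /(_ sx) /eqP; rewrite eqe.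
  move: sx; rewrite /= in_itv /= => /andP[a b].
  by rewrite gt_eqF // beta_pos //; apply/andP; split; lra.
rewrite lebesgue_measure_itv /= lte_fin st -EFinD => /eqP; rewrite eqe.
lra.
Qed.
End Sig.

Lemma alg1 (A u g v G : R) : g != 0 -> G != 0 ->
  A * u / g * (g * v / G) = A / G * (u * v).
Proof. by move=> h1 h2; field; rewrite h1 h2. Qed.

Lemma gauss_gt0 d (m x : 'rV[R]_d) v : 0 < v -> 0 < gauss m v x.
Proof.
move=> v0; rewrite /gauss mulr_gt0 ?expR_gt0 // invr_gt0 exprn_gt0 // sqrtr_gt0.
by rewrite !mulr_gt0 ?pi_gt0.
Qed.

Lemma gauss_ratio d (a b x : 'rV[R]_d) (u v : R) : 0 < u -> 0 < v ->
  gauss a u x * gauss x v b / gauss a (u + v) b =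
  gauss ((v / (u + v)) *: a + (u / (u + v)) *: b) (u * v / (u + v)) x.
Proof.
move=> u0 v0; rewrite gauss_prod // mulrAC divff ?mul1r // gt_eqF // gauss_gt0 //.
lra.
Qed.

Lemma joint_eq d beta (Psi Psihat : 'rV[R]_d -> R -> R) t x0 y x1 :
  (forall x t, 0 <= t <= 1 -> 0 < Psi x t) -> 0 < t < 1 ->
  sb_joint beta Psi Psihat t x0 y x1 =
  (Psihat x0 0 * Psi x1 1) * (gauss x0 (sig2 beta 0 t) y * gauss y (sig2 beta t 1) x1).
Proof.
move=> Pp /andP[t0 t1].
have h1 : Psi x0 0 != 0 by rewrite gt_eqF // Pp // lexx ler01.
have h2 : Psi y t != 0 by rewrite gt_eqF // Pp //; apply/andP; split; lra.
rewrite /sb_joint /sbK /refK; field.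
by rewrite h1 h2.
Qed.
End G.
Theorem proposition3 (R : realType) (d : nat) (beta : R -> R)
  (Psi Psihat : 'rV[R]_d -> R -> R)
  (beta_pos : forall t, 0 <= t <= 1 -> 0 < beta t)
  (beta_int : (@lebesgue_measure R).-integrable `[0, 1] (EFin \o beta))
  (Psi_pos : forall x t, 0 <= t <= 1 -> 0 < Psi x t)
  (Psihat_pos : forall x t, 0 <= t <= 1 -> 0 < Psihat x t)
  (* Psi solves d_t Psi = -1/2 beta Lap Psi (mild form) *)
  (Psi_eq : forall x t, 0 <= t < 1 ->
     ((Psi x t)%:E = intRd (fun y => (refK beta t 1 x y * Psi y 1)%:E))%E)
  (* Psihat solves d_t Psihat = 1/2 beta Lap Psihat (mild form) *)
  (Psihat_eq : forall y t, 0 < t <= 1 ->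
     ((Psihat y t)%:E = intRd (fun x => (Psihat x 0 * refK beta 0 t x y)%:E))%E)
  (* boundary densities *)
  (rho0 : intRd (fun x => (Psi x 0 * Psihat x 0)%:E) = 1%E)
  (rho1 : intRd (fun x => (Psi x 1 * Psihat x 1)%:E) = 1%E) :
  (forall t, 0 < t < 1 -> forall x0 x1 xt : 'rV[R]_d,
     let s2 := sig2 beta 0 t in
     let sb2 := sig2 beta t 1 in
     sb_post beta Psi Psihat t x0 x1 xt =
     gauss ((sb2 / (sb2 + s2)) *: x0 + (s2 / (sb2 + s2)) *: x1)
           (s2 * sb2 / (sb2 + s2)) xt)
  /\
  (forall (N : nat) (tg : nat -> R),
     tg 0%N = 0 -> tg N = 1 -> (forall k, (k < N)%N -> tg k < tg k.+1) ->
     forall n, (1 <= n)%N -> (n <= N.-1)%N ->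
     forall x0 xN xn : 'rV[R]_d,
       ((sb_post beta Psi Psihat (tg n) x0 xN xn)%:E =
        chain beta tg (N.-1 - n) n x0 xN xn)%E).

Proof.
have S2add : forall s t u, 0 <= s <= t -> t <= u <= 1 ->
    sig2 beta s t + sig2 beta t u = sig2 beta s u.
  by move=> s t u h1 h2; apply: sig2_add.
have S2pos : forall s t, 0 <= s -> s < t -> t <= 1 -> 0 < sig2 beta s t.
  by move=> s t h1 h2 h3; apply: sig2_pos.
have P1 : forall t, 0 < t < 1 -> forall x0 x1 xt : 'rV[R]_d,
     let s2 := sig2 beta 0 t in
     let sb2 := sig2 beta t 1 in
     sb_post beta Psi Psihat t x0 x1 xt =
     gauss ((sb2 / (sb2 + s2)) *: x0 + (s2 / (sb2 + s2)) *: x1)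
           (s2 * sb2 / (sb2 + s2)) xt.
  move=> t tt x0 x1 xt s2 sb2.
  have /andP[t0 t1] := tt.
  have u0 : 0 < s2 by apply: S2pos => //; lra.
  have v0 : 0 < sb2 by apply: S2pos => //; lra.
  have P0 : 0 < Psihat x0 0 * Psi x1 1.
    by rewrite mulr_gt0 // ?Psihat_pos ?Psi_pos // lexx ler01.
  have J : (fun y => (sb_joint beta Psi Psihat t x0 y x1)%:E) =
     (fun y => ((Psihat x0 0 * Psi x1 1 * gauss x0 (s2 + sb2) x1) *
        gauss ((sb2 / (s2 + sb2)) *: x0 + (s2 / (s2 + sb2)) *: x1)
           (s2 * sb2 / (s2 + sb2)) y)%:E).
    apply/funext => y; rewrite joint_eq //.
    by rewrite gauss_prod // mulrA.
  rewrite /sb_post J intRd_gauss /=; first last.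
  - by rewrite ltW // mulr_gt0 // gauss_gt0 //; lra.
  - by rewrite divr_gt0 ?mulr_gt0 //; lra.
  rewrite joint_eq //.
  rewrite gauss_prod // [sb2 + s2]addrC.
  have g0 : 0 < gauss x0 (s2 + sb2) x1 by apply: gauss_gt0; lra.
  have h1 : Psi x1 1 != 0 by rewrite gt_eqF // Psi_pos // ler01 lexx.
  have h2 : Psihat x0 0 != 0 by rewrite gt_eqF // Psihat_pos // ler01 lexx.
  by field; rewrite h1 h2 gt_eqF.
split => //.
move=> N tg tg0 tgN tginc.
have mono : forall k l, (k < l)%N -> (l <= N)%N -> tg k < tg l.
  move=> k l; elim: l => [|l IH] // kl lN.
  rewrite ltnS leq_eqVlt in kl; case/orP: kl => [/eqP->|kl]; first exact: tginc.
  exact: lt_trans (IH kl (ltnW lN)) (tginc _ lN).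
have rng : forall k, (k <= N)%N -> 0 <= tg k <= 1.
  move=> k kN; apply/andP; split.
    case: k kN => [|k] kN; first by rewrite tg0.
    by rewrite -tg0 ltW // mono.
  rewrite -tgN; move: kN; rewrite leq_eqVlt => /orP[/eqP->|kN] //.
  by rewrite ltW // mono.
have CH : forall j n, (1 <= n)%N -> (n + j = N.-1)%N -> forall x0 xN xn : 'rV[R]_d,
    chain beta tg j n x0 xN xn =
    (gauss x0 (sig2 beta 0 (tg n)) xn * gauss xn (sig2 beta (tg n) 1) xN /
     gauss x0 (sig2 beta 0 1) xN)%:E.
  elim=> [|j IH] n n1 nj x0 xN xn /=.
    have eN : n.+1 = N by lia.
    by rewrite /ddpm_post /refK eN tgN.
  have hn1 : (n.+1 < N)%N by lia.
  have r0 := rng n (ltnW (ltnW hn1)).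
  have r1 := rng n.+1 (ltnW hn1).
  have m01 : tg n < tg n.+1 by apply: tginc; lia.
  have m1N : tg n.+1 < 1 by rewrite -tgN; apply: mono.
  have m0n : 0 < tg n by rewrite -tg0; apply: mono => //; lia.
  have a0 : 0 < sig2 beta (tg n) (tg n.+1) by apply: S2pos => //; lra.
  have b0 : 0 < sig2 beta (tg n.+1) 1 by apply: S2pos => //; lra.
  have sn0 : 0 < sig2 beta 0 (tg n) by apply: S2pos => //; lra.
  have sn1 : 0 < sig2 beta 0 (tg n.+1) by apply: S2pos => //; lra.
  have S0 : 0 < sig2 beta 0 1 by apply: S2pos => //; lra.
  set a := sig2 beta (tg n) (tg n.+1).
  set b := sig2 beta (tg n.+1) 1.
  have g1 : forall y, gauss x0 (sig2 beta 0 (tg n.+1)) y != 0.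
    by move=> y; rewrite gt_eqF // gauss_gt0.
  have g2 : gauss x0 (sig2 beta 0 1) xN != 0 by rewrite gt_eqF // gauss_gt0.
  transitivity (intRd (fun y => ((gauss x0 (sig2 beta 0 (tg n)) xn /
      gauss x0 (sig2 beta 0 1) xN * gauss xn (a + b) xN) *
      gauss ((b / (a + b)) *: xn + (a / (a + b)) *: xN) (a * b / (a + b)) y)%:E)).
    apply: f_equal; apply/funext => y.
    have e : (n.+1 + j = N.-1)%N by rewrite addSnnS.
    rewrite IH // -EFinM; congr EFin.
    rewrite /ddpm_post /refK -/a -/b -[RHS]mulrA -gauss_prod //.
    by rewrite alg1.
  have ab : 0 < a + b by rewrite addr_gt0.
  have vpos : 0 < a * b / (a + b) by apply: divr_gt0 => //; apply: mulr_gt0.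
  have cpos : 0 <= gauss x0 (sig2 beta 0 (tg n)) xn /
      gauss x0 (sig2 beta 0 1) xN * gauss xn (a + b) xN.
    by apply: ltW; apply: mulr_gt0; [apply: divr_gt0|]; apply: gauss_gt0.
  rewrite intRd_gauss //.
  have h1 : 0 <= tg n <= tg n.+1 by move: r0 => /andP[r r']; rewrite r (ltW m01).
  have h2 : tg n.+1 <= 1 <= (1:R) by apply/andP; split; [exact: ltW|].
  by apply: f_equal; rewrite /a /b S2add // mulrAC.
move=> n n1 nN x0 xN xn.
have nN' : (n < N)%N by lia.
have r0 := rng n (ltnW nN').
have m1N : tg n < 1 by rewrite -tgN; apply: mono.
have m0n : 0 < tg n by rewrite -tg0; apply: mono => //; lia.
have sn0 : 0 < sig2 beta 0 (tg n) by apply: S2pos => //; lra.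
have b0 : 0 < sig2 beta (tg n) 1 by apply: S2pos => //; lra.
have e : (n + (N.-1 - n) = N.-1)%N by rewrite subnKC.
have tt : 0 < tg n < 1 by apply/andP.
have h1 : (0:R) <= 0 <= tg n by apply/andP; split; [|exact: ltW].
have h2 : tg n <= 1 <= (1:R) by apply/andP; split; [exact: ltW|].
rewrite CH // P1 // -(S2add 0 (tg n) 1) //.
by rewrite gauss_ratio // [sig2 beta (tg n) 1 + _]addrC.
Qed.
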